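(* In any run $R$ of algorithm $\mathcal{A}_{\mathrm{reg}}$, for all $op, op' \in C(R)$: if $op \rightarrow op'$ then $op \prec op'$.
   Context: $op \rightarrow op'$ means the response event of $op$ occurs before the invocation event of $op'$ in the history of $R$. System model: $n$ asynchronous, crash-prone processes with identities in $\{1,\ldots,n\}$. Each process $k$ is the unique writer of a reliable linearizable single-writer multi-reader Distributed Ledger Object (DLO) $L_k$, readable by all processes; its state is a finite sequence of records, initially empty, with operations $L_k.get()$ (returns the current sequence) and $L_k.append(r)$ (appends record $r$); every invocation by a correct process completes. Well-formedness: a process does not invoke $\mathrm{apply}$ before its previous invocation has finished. Validated object: given a predicate $\mathrm{valid}(\langle P,\prec\rangle, op, i)$ and a function $\mathrm{execute}(\langle P,\prec\rangle, op, i)$, whose first argument is a strictly partially ordered set of operations, $op$ an operation and $i$ its issuing process. Clients use $\mathrm{apply}(op,i)$, returning $(\mathit{ACK}, r)$ if $op$ is found valid and executed with result $r$, and $(\mathit{NACK},-)$ otherwise. The history of a run $R$ contains only operations for which $\mathrm{apply}$ returns $\mathit{ACK}$; $C(R)$ is the set of complete such operations. Algorithm $\mathcal{A}_{\mathrm{reg}}$ (code of $\mathrm{apply}(op,i)$ at process $i$): for $j=1,\ldots,n$ in order, set $G_j \leftarrow L_j.get()$, $T_j \leftarrow |G_j|$; set $ts \leftarrow (i,T_1,\ldots,T_n)$; set $P \leftarrow \{op' : \langle ts',op'\rangle \in \bigcup_j G_j\}$; if $\mathrm{valid}(\langle P,\prec\rangle, op, i)$ then $res \leftarrow \mathrm{execute}(\langle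 P,\prec\rangle, op,i)$, $L_i.append(\langle ts, op\rangle)$, return $(\mathit{ACK},res)$; otherwise return $(\mathit{NACK},-)$. The invocation event of a valid operation is the invocation of $L_1.get()$, its response event the completion of $L_i.append(\langle ts,op\rangle)$. $ts$ is the timestamp $ts(op)$. Order $\prec$: for $op,op' \in C(R)$ with $ts(op)=(i,T_1,\ldots,T_n)$, $ts(op')=(k,T'_1,\ldots,T'_n)$, $op \prec op'$ iff $T_i < T'_i$. *)

(* Defs.v *)
From mathcomp Require Import all_boot.
Set Implicit Arguments.
Unset Strict Implicit.
Unset Printing Implicit Defensive.

(* Processes are 'I_n (paper's process k+1 is ordinal k); ledger L_{k+1} is
   indexed by the natural number k.  A timestamp (i, T_1..T_n) is a pair of
   the issuing process and the sequence [T_1; ...; T_n]. *)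
Definition tstamp (n : nat) := ('I_n * seq nat)%type.
Definition record (n : nat) (Op : Type) := (tstamp n * Op)%type.

(* Each DLO operation is split into invocation,
   linearization point, and response (linearizable objects).  Purely local
   computation is folded into the adjacent event of the same process:
   - Invoke i op : invocation of apply(op,i), i.e. invocation of L_1.get();
   - LinGet i    : linearization point of i's pending get();
   - RespGet i   : response of i's pending get() on L_j; then i either invokes
                   L_{j+1}.get(), or (j = n) computes ts, P, valid, and either
                   computes execute and invokes L_i.append(<ts,op>), or
                   returns (NACK,-);
   - LinApp i    : linearization point of i's pending append;
   - RespApp i   : response of L_i.append, i.e. apply returns (ACK,res). *)
Inductive label (n : nat) (Op : Type) :=
| Invoke of 'I_n & Op
| LinGet of 'I_n
| RespGet of 'I_n
| LinApp of 'I_n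
| RespApp of 'I_n.

Inductive pstate (n : nat) (Op Res : Type) :=
| Idle
  (* reading: op, results G_1..G_{j-1} collected so far, pending get on L_j:
     None = not yet linearized, Some g = linearized with return value g *)
| Reading of Op & seq (seq (record n Op)) & option (seq (record n Op))
  (* appending <ts,op>, result res, flag: append already linearized *)
| Appending of Op & tstamp n & Res & bool.

Record config (n : nat) (Op Res : Type) := Config {
  ledgers : nat -> seq (record n Op);
  procs : 'I_n -> pstate n Op Res }.

Definition init_config (n : nat) (Op Res : Type) : config n Op Res :=
  Config (fun _ => [::]) (fun _ => Idle n Op Res).

Definition set_proc (n : nat) (Op Res : Type) (c : config n Op Res)
  (i : 'I_n) (s : pstate n Op Res) : config n Op Res :=
  Config (ledgers c) (fun j => if j == i then s else procs c j).

(* One step of the system.  [valid] and [execute] receive the collected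
   sequences G_1..G_n (from which P and the order on it are determined),
   the operation and the issuing process. *)
Definition step (n : nat) (Op Res : Type)
  (valid : seq (seq (record n Op)) -> Op -> 'I_n -> bool)
  (execute : seq (seq (record n Op)) -> Op -> 'I_n -> Res)
  (c : config n Op Res) (l : label n Op) : option (config n Op Res) :=
  match l with
  | Invoke i op =>
      if procs c i is Idle then Some (set_proc c i (Reading Res op [::] None))
      else None
  | LinGet i =>
      if procs c i is Reading op G None then
        Some (set_proc c i (Reading Res op G (Some (ledgers c (size G)))))
      else None
  | RespGet i =>
      if procs c i is Reading op G (Some g) then
        let G' := rcons G g in
        if size G' < n then Some (set_proc c i (Reading Res op G' None))
        else if valid G' op i then
          Some (set_proc c i (Appending op (i, map size G') (execute G' op i) false))
        else Some (set_proc c i (Idle n Op Res))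
      else None
  | LinApp i =>
      if procs c i is Appending op ts r false then
        Some (Config (fun x => if x == val i then rcons (ledgers c x) (ts, op)
                               else ledgers c x)
                     (fun j => if j == i then Appending op ts r true
                               else procs c j))
      else None
  | RespApp i =>
      if procs c i is Appending op ts r true then
        Some (set_proc c i (Idle n Op Res))
      else None
  end.

Fixpoint exec (n : nat) (Op Res : Type)
  (valid : seq (seq (record n Op)) -> Op -> 'I_n -> bool)
  (execute : seq (seq (record n Op)) -> Op -> 'I_n -> Res)
  (c : config n Op Res) (ls : seq (label n Op)) : option (config n Op Res) :=
  match ls with
  | [::] => Some c
  | l :: ls' =>
      match step valid execute c l with
      | Some c' => exec valid execute c' ls'
      | None => None
      end
  end.

(* A (finite prefix of a) run: a schedule of events, each enabled.  Crashes
   are modelled by a process simply taking no further steps; asynchrony by an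
   arbitrary interleaving. *)
Definition is_run (n : nat) (Op Res : Type)
  (valid : seq (seq (record n Op)) -> Op -> 'I_n -> bool)
  (execute : seq (seq (record n Op)) -> Op -> 'I_n -> Res)
  (ls : seq (label n Op)) : Prop :=
  exists c, exec valid execute (init_config n Op Res) ls = Some c.

Definition acked (n : nat) (Op : Type) (ls : seq (label n Op))
  (i : 'I_n) (t t' : nat) : Prop :=
  [/\ t < t',
      exists op, onth ls t = Some (Invoke i op),
      onth ls t' = Some (@RespApp n Op i)
    & forall u op, t < u < t' -> onth ls u <> Some (Invoke i op)].

(* The timestamp ts of the operation of process i whose response is at time
   t' (the value of the local variable ts just before that event). *)
Definition ts_at (n : nat) (Op Res : Type)
  (valid : seq (seq (record n Op)) -> Op -> 'I_n -> bool)
  (execute : seq (seq (record n Op)) -> Op -> 'I_n -> Res)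
  (ls : seq (label n Op)) (i : 'I_n) (t' : nat) : option (tstamp n) :=
  match exec valid execute (init_config n Op Res) (take t' ls) with
  | Some c => if procs c i is Appending _ ts _ _ then Some ts else None
  | None => None
  end.

(* op ≺ op' with ts(op) = (i,T), ts(op') = (k,T'): T_i < T'_i. *)
Definition ts_prec (n : nat) (ts ts' : tstamp n) : Prop :=
  nth 0 ts.2 ts.1 < nth 0 ts'.2 ts.1.

(* Main.v *)
Require Import Defs.
From mathcomp Require Import all_boot.
Set Implicit Arguments.

Lemma exec_cat (n : nat) (Op Res : Type) v e (c : config n Op Res) s1 s2 :
  exec v e c (s1 ++ s2) = if exec v e c s1 is Some c1 then exec v e c1 s2 else None.
Proof.
elim: s1 c => [|l s IH] c //=. case: (step v e c l) => // c'.
Qed.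

Lemma exec_rcons (n : nat) (Op Res : Type) v e (c : config n Op Res) s l :
  exec v e c (rcons s l) = if exec v e c s is Some c1 then step v e c1 l else None.
Proof.
rewrite -cats1 exec_cat; case: (exec v e c s) => // c1 /=. by case: step.
Qed.

Lemma exec_inv (n : nat) (Op Res : Type) v e (P : config n Op Res -> Prop) :
  (forall c l c', step v e c l = Some c' -> P c -> P c') ->
  forall s c c', exec v e c s = Some c' -> P c -> P c'.
Proof.
move=> H; elim=> [|l s IH] c c' /=; first by case=> ->.
case E: (step v e c l) => [c1|] // Hx Pc. exact: (IH c1 c' Hx (H _ _ _ E Pc)).
Qed.

Lemma exec_take (n : nat) (Op Res : Type) v e (c : config n Op Res) ls cf t :
  exec v e c ls = Some cf -> exists c1, exec v e c (take t ls) = Some c1.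
Proof.
rewrite -{1}(cat_take_drop t ls) exec_cat. case: (exec v e c (take t ls)) => // c1 _.
by exists c1.
Qed.

Lemma step_grow (n : nat) (Op Res : Type) v e (c c' : config n Op Res) l :
  step v e c l = Some c' -> forall x, size (ledgers c x) <= size (ledgers c' x).
Proof.
case: l => [i o0|i|i|i|i] /=; case: (procs c i) => [|o G [g|]|o ts r [|]] //=;
  try (by case=> <-);
  try (case: ifP => _; [by case => <- | case: ifP => _; by case => <-]).
case=> <- x /=. case: ifP => _ //. by rewrite size_rcons.
Qed.

Definition pinv (n : nat) (Op Res : Type) (L : nat -> nat) (j : 'I_n)
  (s : pstate n Op Res) : Prop :=
  match s with
  | Idle => True
  | Reading _ G g => (forall x, x < size G -> size (nth [::] G x) <= L x) /\
                     (forall g', g = Some g' -> size g' <= L (size G))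
  | Appending _ ts _ b => ts.1 = j /\ nth 0 ts.2 j + b <= L (val j)
  end.

Definition inv1 (n : nat) (Op Res : Type) (c : config n Op Res) : Prop :=
  forall j, pinv (fun x => size (ledgers c x)) j (procs c j).

Lemma pinv_mono (n : nat) (Op Res : Type) (L L' : nat -> nat) j (s : pstate n Op Res) :
  (forall x, L x <= L' x) -> pinv L j s -> pinv L' j s.
Proof.
move=> HL; case: s => [|o G g|o ts r b] //=.
- case=> H1 H2; split=> [x /H1|g' /H2] H; exact: leq_trans H (HL _).
- case=> -> H; split=> //; exact: leq_trans H (HL _).
Qed.

Lemma inv1_step (n : nat) (Op Res : Type) v e (c c' : config n Op Res) l :
  step v e c l = Some c' -> inv1 c -> inv1 c'.
Proof.
move=> Hs Hc j.
have Hg := @step_grow _ _ _ _ _ _ _ _ Hs.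
have HL : forall c0 : config n Op Res, ledgers c0 = ledgers c -> forall j, procs c0 j = procs c j -> pinv (fun x => size (ledgers c0 x)) j (procs c0 j).
  by move=> c0 -> j0 ->; apply: Hc.
move: Hs Hg; case: l => [i o0|i|i|i|i] /=; case E: (procs c i) => [|o G [g|]|o ts r [|]] //=.
- case=> <- _ /=; case: eqP => [->|_]; first by []. exact: Hc.
- case=> <- _ /=; case: eqP => [->|_]; last exact: Hc.
  have := Hc i; rewrite E /= => -[H1 _]; split=> // g' [<-] //.
- case: ifP => Hn.
    case=> <- _ /=; case: eqP => [->|_]; last exact: Hc.
    have := Hc i; rewrite E /= => -[H1 H2]; split=> // x.
    rewrite size_rcons ltnS nth_rcons leq_eqVlt => /orP[/eqP->|Hx].
      by rewrite ltnn eqxx; apply: H2.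
    by rewrite Hx; apply: H1.
  case: ifP => _; case=> <- _ /=; case: eqP => [->|_]; (try exact: Hc) => //.
  have := Hc i; rewrite E /= => -[H1 H2]; split=> //.
  have Hi : i < size (rcons G g) by apply: (leq_trans (ltn_ord i)); rewrite leqNgt Hn.
  rewrite addn0 (nth_map [::]) // nth_rcons.
  move: Hi; rewrite size_rcons ltnS leq_eqVlt => /orP[/eqP Hi|Hi].
    by rewrite Hi ltnn eqxx; apply: H2.
  by rewrite Hi; apply: H1.
- case=> <- Hg /=; case: eqP => [->|_]; last first.
    apply: (@pinv_mono _ _ _ (fun x => size (ledgers c x))); last exact: Hc.
    by move=> x; have := Hg x.
  have := Hc i; rewrite E /= => -[H1 H2]; split=> //.
  by rewrite eqxx size_rcons addn1 ltnS -(addn0 (nth 0 _ _)).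
- case=> <- _ /=; case: eqP => [->|_]; first by []. exact: Hc.
Qed.

Definition kinv (n : nat) (Op Res : Type) (L0 : nat -> nat) (s : pstate n Op Res) : Prop :=
  match s with
  | Idle => True
  | Reading _ G g => (forall x, x < size G -> L0 x <= size (nth [::] G x)) /\
                     (forall g', g = Some g' -> L0 (size G) <= size g')
  | Appending _ ts _ _ => forall x, x < n -> L0 x <= nth 0 ts.2 x
  end.

Definition jinv (n : nat) (Op Res : Type) (L0 : nat -> nat) (k : 'I_n) (c : config n Op Res) : Prop :=
  (forall x, L0 x <= size (ledgers c x)) /\ kinv L0 (procs c k).

Lemma jinv_step (n : nat) (Op Res : Type) v e (c c' : config n Op Res) l L0 k :
  step v e c l = Some c' -> jinv L0 k c -> jinv L0 k c'.
Proof.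
move=> Hs [Hl Hk].
have Hg := @step_grow _ _ _ _ _ _ _ _ Hs.
split; first by move=> x; apply: leq_trans (Hl x) (Hg x).
move: Hs Hg; case: l => [i o0|i|i|i|i] /=; case E: (procs c i) => [|o G [g|]|o ts r [|]] //=.
- case=> <- _ /=; case: eqP => [_|_] //; by split.
- case=> <- _ /=; case: eqP => [Ek|_] //; move: Hk; rewrite Ek E /= => -[H1 _].
  by split=> // g' [<-].
- case: ifP => Hn.
    case=> <- _ /=; case: eqP => [Ek|_] //; move: Hk; rewrite Ek E /= => -[H1 H2].
    split=> // x.
    rewrite size_rcons ltnS nth_rcons leq_eqVlt => /orP[/eqP->|Hx].
      by rewrite ltnn eqxx; apply: H2.
    by rewrite Hx; apply: H1.
  case: ifP => _; case=> <- _ /=; case: eqP => [Ek|_] //; move: Hk; rewrite Ek E /= => -[H1 H2].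
  move=> x Hxn.
  have Hi : x < size (rcons G g) by apply: (leq_trans Hxn); rewrite leqNgt Hn.
  rewrite (nth_map [::]) // nth_rcons.
  move: Hi; rewrite size_rcons ltnS leq_eqVlt => /orP[/eqP Hi|Hi].
    by rewrite Hi ltnn eqxx; apply: H2.
  by rewrite Hi; apply: H1.
- case=> <- Hg /=; case: eqP => [Ek|_] //; move: Hk; rewrite Ek E //.
- case=> <- _ /=; case: eqP => [_|_] //.
Qed.

Theorem mainTheorem2 (n : nat) (Op Res : Type)
  (valid : seq (seq (record n Op)) -> Op -> 'I_n -> bool)
  (execute : seq (seq (record n Op)) -> Op -> 'I_n -> Res)
  (ls : seq (label n Op)) :
  is_run valid execute ls ->
  forall (i k : 'I_n) (t1 t1' t2 t2' : nat),
    acked ls i t1 t1' -> acked ls k t2 t2' ->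
    t1' < t2 ->
    exists ts1 ts2 : tstamp n,
      [/\ ts_at valid execute ls i t1' = Some ts1,
          ts_at valid execute ls k t2' = Some ts2
        & ts_prec ts1 ts2].
Proof.
move=> [cf Hcf] i k t1 t1' t2 t2' [_ _ R1 _] [Ht2 [o2 I2] R2 _] Ht.
have cfgS : forall t l, onth ls t = Some l -> forall c, exec valid execute (init_config n Op Res) (take t ls) = Some c ->
    exists c', step valid execute c l = Some c'.
  move=> t l Hl c Hc.
  have Hts : t < size ls by rewrite -onthTE Hl.
  have [c1 Hc1] := @exec_take _ _ _ _ _ _ _ _ t.+1 Hcf.
  move: Hc1; rewrite (take_nth l Hts) exec_rcons Hc (@onth_nth _ l _ _ _ Hl) => ->; by eexists.
have [c1 Hc1] := @exec_take _ _ _ _ _ _ _ _ t1' Hcf.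
have [c1' S1] := cfgS _ _ R1 _ Hc1.
move: S1 => /=; case E1: (procs c1 i) => [|? ? ?|o1 ts1 r1 [|]] //= _.
have [c2 Hc2] := @exec_take _ _ _ _ _ _ _ _ t2 Hcf.
have [c2' S2] := cfgS _ _ I2 _ Hc2.
move: S2 => /=; case E2: (procs c2 k) => // _.
have [c3 Hc3] := @exec_take _ _ _ _ _ _ _ _ t2' Hcf.
have [c3' S3] := cfgS _ _ R2 _ Hc3.
move: S3 => /=; case E3: (procs c3 k) => [|? ? ?|o3 ts2 r3 [|]] //= _.
exists ts1, ts2; split.
- by rewrite /ts_at Hc1 E1.
- by rewrite /ts_at Hc3 E3.
have I1 : inv1 c1.
  apply: (@exec_inv n Op Res valid execute (@inv1 n Op Res) _ (take t1' ls) (init_config n Op Res) c1 Hc1).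
    by move=> c c' l; apply: inv1_step.
  by move=> j.
have := I1 i; rewrite E1 /= => -[Hts1 Hle1].
have Hsplit : forall a b c c', a <= b -> exec valid execute (init_config n Op Res) (take a ls) = Some c ->
    exec valid execute (init_config n Op Res) (take b ls) = Some c' ->
    exec valid execute c (take (b - a) (drop a ls)) = Some c'.
  move=> a b c c' Hab Ha Hb. by move: Hb; rewrite -(subnKC Hab) takeD exec_cat Ha subnKC.
have G12 : forall x, size (ledgers c1 x) <= size (ledgers c2 x).
  apply: (@exec_inv n Op Res valid execute (fun c => forall x, size (ledgers c1 x) <= size (ledgers c x)) _ _ _ _ (Hsplit _ _ _ _ (ltnW Ht) Hc1 Hc2)) => //.
  move=> c c' l Hs H x; apply: leq_trans (H x) _; exact: (@step_grow _ _ _ _ _ _ _ _ Hs).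
have J23 : jinv (fun x => size (ledgers c2 x)) k c3.
  apply: (@exec_inv n Op Res valid execute (@jinv n Op Res (fun x => size (ledgers c2 x)) k) _ _ _ _ (Hsplit _ _ _ _ (ltnW Ht2) Hc2 Hc3)).
    by move=> c c' l; apply: jinv_step.
  by split=> //; rewrite E2.
move: J23 => [_]; rewrite E3 /= => /(_ (val i) (ltn_ord i)) H3.
rewrite /ts_prec Hts1.
apply: leq_trans H3; apply: leq_trans (G12 _).
by move: Hle1; rewrite addn1.
Qed.
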